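(* In the setting of the context, with $\alpha_k=\frac a{b+k}$, $a>0$, $b>1$, $\frac ab\le\frac1{2M\tilde L}$, put $t=2a\sigma_\ell^2$ and for $n\ge1$ let $T_n=\sum_{i=1}^nA_i^{(n)}C(\alpha_{i-1})$. If $t<1$ there is a constant $K$ independent of $n$ with $T_n\le K(b+n)^{-t}$ for all $n\ge1$; if $t>1$ there is a constant $K$ independent of $n$ with $T_n\le K(b+n)^{-1}$ for all $n\ge1$.
   Context: Standing setting: $M\ge N$, $A\in\mathbb{R}^{M\times N}$ of full column rank with rows $a_1,\dots,a_M$, right-hand side $(b_1,\dots,b_M)$, $F(x)=\frac12\|Ax-(b_1,\dots,b_M)^\top\|^2$, $F_*=\min F$; singular values $\sigma_1\ge\dots\ge\sigma_N>0$, $\tilde L=\max_i\|a_i\|^2$. Fix $\ell$. $C(\alpha)=2\alpha^2M\tilde LF_*$; for fixed $n$ and $0\le k\le n$, $A_k^{(n)}=\prod_{i=k}^n(1-2\alpha_i\sigma_\ell^2)$. (Step-size scalars $a,b$ are unrelated to $a_i,b_i$.) *)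

(* Defs.v *)
From HB Require Import structures.
From mathcomp Require Import all_boot all_order all_algebra.
From mathcomp Require Import all_classical all_reals all_analysis.
Set Implicit Arguments. Unset Strict Implicit. Unset Printing Implicit Defensive.
Import Order.TTheory GRing.Theory Num.Theory.
Local Open Scope ring_scope.

Definition sqnorm (R : realType) (m : nat) (v : 'cV[R]_m) : R :=
  \sum_(i < m) (v i ord0) ^+ 2.

Definition Fls (R : realType) (M N : nat) (A : 'M[R]_(M, N)) (b : 'cV[R]_M)
  (x : 'cV[R]_N) : R := sqnorm (A *m x - b) / 2.

Definition Ltil (R : realType) (M N : nat) (A : 'M[R]_(M, N)) : R :=
  \big[Num.max/0]_(i < M) \sum_(j < N) (A i j) ^+ 2.

Definition alpha (R : realType) (a b : R) (k : nat) : R := a / (b + k%:R).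

Definition Cst (R : realType) (M : nat) (Lt Fstar al : R) : R :=
  2 * al ^+ 2 * M%:R * Lt * Fstar.

Definition Aprod (R : realType) (a b sigma : R) (k n : nat) : R :=
  \prod_(k <= i < n.+1) (1 - 2 * alpha a b i * sigma ^+ 2).

Definition Tn (R : realType) (M : nat) (Lt Fstar a b sigma : R) (n : nat) : R :=
  \sum_(1 <= i < n.+1) Aprod a b sigma i n * Cst M Lt Fstar (alpha a b i.-1).

(* Main.v *)
Require Import Defs.
From HB Require Import structures.
From mathcomp Require Import all_boot all_order all_algebra.
From mathcomp Require Import all_classical all_reals all_analysis.
From mathcomp Require Import ring lra.
Import Order.TTheory GRing.Theory Num.Theory.
Local Open Scope ring_scope.

Section An.
Variable R : realType.
Implicit Types x y z p q : R.

Lemma powRE x r : 0 < x -> powR x r = expR (r * ln x).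
Proof. by move=> hx; rewrite /powR gt_eqF. Qed.

Lemma ln1p_le z : 0 < z -> ln (z + 1) <= ln z + z^-1.
Proof.
move=> hz.
have -> : z + 1 = z * (1 + z^-1) by rewrite mulrDr mulr1 mulfV ?gt_eqF.
rewrite lnM ?posrE //; last by rewrite ltr_wpDr // invr_ge0 ltW.
rewrite lerD2l le_ln1Dx //.
by apply: (@lt_le_trans _ _ 0); rewrite ?invr_ge0 ?ltW // ltrN10.
Qed.

Lemma ln1m_le z : 1 < z -> ln (z - 1) <= ln z - z^-1.
Proof.
move=> hz; have hz0 : 0 < z by lra.
have -> : z - 1 = z * (1 + - z^-1) by rewrite mulrDr mulr1 mulrN mulfV ?gt_eqF.
have hi : z^-1 < 1 by rewrite invf_lt1.
rewrite lnM ?posrE //; last by rewrite subr_gt0.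
by rewrite lerD2l le_ln1Dx // ltrN2.
Qed.

Lemma factor_le z q : 0 < z -> 0 <= q ->
  (1 - q / z) * powR (z + 1) q <= powR z q.
Proof.
move=> hz hq.
rewrite !powRE //; last by lra.
apply: (@le_trans _ _ (expR (- (q / z)) * expR (q * ln (z + 1)))).
  apply: ler_wpM2r; first exact: expR_ge0.
  by have := expR_ge1Dx (- (q / z)).
rewrite -expRD ler_expR.
have := ln1p_le z hz.
move=> h.
have : q * ln (z + 1) <= q * (ln z + z^-1) by rewrite ler_wpM2l.
rewrite mulrDr -/(q / z); lra.
Qed.

Lemma incr_le z p : 2 <= z -> 0 < p ->
  powR z (1 - p) / (z - 1) ^+ 2 <= 4 / p * (powR (z - 1) (- p) - powR z (- p)).
Proof.
move=> hz hp; have hz0 : 0 < z by lra. have hz1 : 0 < z - 1 by lra.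
rewrite !powRE //.
set L := ln z. set e := expR (- p * L).
have he : 0 < e by rewrite expR_gt0.
have -> : expR ((1 - p) * L) = e * z.
  by rewrite /e -[X in _ = _ * X](lnK (x:=z)) ?posrE // -expRD; congr expR; rewrite /L; lra.
have hd : e * (p / z) <= expR (- p * ln (z - 1)) - e.
  have h1 : e * (1 + p / z) <= expR (- p * ln (z - 1)).
    apply: (@le_trans _ _ (e * expR (p / z))).
      by apply: ler_wpM2l; [exact: ltW | exact: expR_ge1Dx].
    rewrite /e -expRD ler_expR.
    have := ln1m_le z ltac:(lra).
    rewrite -/L => h.
    have : p * ln (z - 1) <= p * (L - z^-1) by apply: ler_wpM2l; [exact: ltW|exact: h].
    rewrite mulrBr -/(p / z); lra.
  by rewrite mulrDr mulr1 in h1; lra.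
have hk : e * z / (z - 1) ^+ 2 <= 4 / p * (e * (p / z)).
  have -> : 4 / p * (e * (p / z)) = 4 * e / z by field; rewrite !gt_eqF.
  rewrite -subr_ge0.
  have -> : 4 * e / z - e * z / (z - 1) ^+ 2 = e * (4 * (z - 1) ^+ 2 - z ^+ 2) / (z * (z - 1) ^+ 2).
    by field; rewrite ?gt_eqF ?mulf_neq0 ?expf_neq0 ?gt_eqF.
  apply: divr_ge0; last by rewrite mulr_ge0 ?exprn_ge0 ?ltW.
  by apply: mulr_ge0; [exact: ltW | nra].
apply: (le_trans hk); apply: ler_wpM2l; [by rewrite divr_ge0 // ltW | lra].
Qed.
End An.

Section B.
Variable R : realType.

Lemma CS n (x y : 'I_n -> R) :
  (\sum_i x i * y i) ^+ 2 <= (\sum_i x i ^+ 2) * (\sum_i y i ^+ 2).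
Proof.
have E : \sum_i \sum_j (x i * y j - x j * y i) ^+ 2 =
  (\sum_i x i ^+ 2) * (\sum_j y j ^+ 2) + (\sum_i y i ^+ 2) * (\sum_j x j ^+ 2)
  - 2 * ((\sum_i x i * y i) * (\sum_j x j * y j)).
  rewrite !mulr_suml.
  under [in RHS]eq_bigr do rewrite mulr_sumr.
  under [X in _ = _ + X - _]eq_bigr do rewrite mulr_sumr.
  under [X in _ = _ - _ * X]eq_bigr do rewrite mulr_sumr.
  rewrite mulr_sumr -big_split -sumrB; apply: eq_bigr => i _.
  rewrite mulr_sumr -big_split -sumrB; apply: eq_bigr => j _.
  rewrite /=; ring.
have : 0 <= \sum_i \sum_j (x i * y j - x j * y i) ^+ 2.
  by apply: sumr_ge0 => i _; apply: sumr_ge0 => j _; exact: sqr_ge0.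
rewrite E mulrC [(\sum_i y i ^+ 2) * _]mulrC expr2; lra.
Qed.

Lemma eig_bound M N (A : 'M[R]_(M, N)) s :
  eigenvalue (A^T *m A) s -> s <= M%:R * Ltil A.
Proof.
case/eigenvalueP => v hv vn0.
set w := v *m A^T.
have E : (v *m (A^T *m A)) *m v^T = w *m w^T by rewrite /w trmx_mul trmxK !mulmxA.
rewrite hv -scalemxAl in E.
set nv := \sum_j v 0 j * v 0 j.
have E2 : s * nv = \sum_i w 0 i * w 0 i.
  have L1 : (s *: (v *m v^T)) 0 0 = s * nv.
    by rewrite mxE mxE; congr (_ * _); apply: eq_bigr => j _; rewrite mxE.
  have L2 : (w *m w^T) 0 0 = \sum_i w 0 i * w 0 i.
    by rewrite mxE; apply: eq_bigr => i _; rewrite [w^T i 0]mxE.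
  by rewrite -L1 -L2 E.
have nvge : 0 <= nv by apply: sumr_ge0 => j _; rewrite -expr2; exact: sqr_ge0.
have nvpos : 0 < nv.
  rewrite lt_def nvge andbT; apply/negP => /eqP h.
  move/eqP: vn0; apply; apply/rowP => j; rewrite [RHS]mxE.
  have sq k : 0 <= v 0 k * v 0 k by rewrite -expr2 sqr_ge0.
  have := psumr_eq0P (fun k _ => sq k) h (i:=j) isT.
  by move/eqP; rewrite mulf_eq0 orbb => /eqP.
have hw i : w 0 i * w 0 i <= nv * Ltil A.
  have -> : w 0 i = \sum_j v 0 j * A i j by rewrite /w mxE; apply: eq_bigr => j _; rewrite mxE.
  apply: (le_trans (y := nv * \sum_j A i j ^+ 2)).
    rewrite -expr2 /nv.
    under [X in _ <= X * _]eq_bigr do rewrite -expr2.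
    exact: CS.
  apply: ler_wpM2l => //.
  rewrite /Ltil; exact: (le_bigmax _ (fun i => \sum_(j < N) A i j ^+ 2) i).
have : s * nv <= M%:R * Ltil A * nv.
  rewrite E2.
  apply: (le_trans (y := \sum_(i < M) nv * Ltil A)).
    by apply: ler_sum => i _; exact: hw.
  by rewrite sumr_const card_ord -[X in X <= _]mulr_natl mulrCA [X in X <= _]mulrC.
by rewrite ler_pM2r.
Qed.

Lemma Tn_rec M (Lt F a b s : R) n :
  Tn M Lt F a b s n.+1 =
  (1 - 2 * alpha a b n.+1 * s ^+ 2) * (Tn M Lt F a b s n + Cst M Lt F (alpha a b n)).
Proof.
rewrite /Tn big_nat_recr //= /Aprod big_nat1 mulrDr; congr (_ + _).
rewrite mulr_sumr; apply: eq_big_nat => i /andP [h1 h2].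
rewrite big_nat_recr /=; [ring | exact: ltnW].
Qed.
Lemma keyT (B t D : R) : 1 < B -> 1 < t ->
  2 * D / (t - 1) / (B + 1) - (1 - t / (B + 1)) * (2 * D / (t - 1) / B + D / B ^+ 2)
        = D * (B - 1 + t) / (B ^+ 2 * (B + 1)).
Proof.
move=> hB ht.
have h1 : t - 1 != 0 by rewrite subr_eq0 gt_eqF.
have h2 : B != 0 by rewrite gt_eqF //; lra.
have h3 : B + 1 != 0 by rewrite gt_eqF //; lra.
by field; rewrite ?h1 ?h2 ?h3 ?mulf_neq0 ?expf_neq0.
Qed.
End B.

Theorem lemma17 (R : realType) (M N : nat) (A : 'M[R]_(M, N)) (bv : 'cV[R]_M)
  (Fstar sigma a b : R) :
  (N <= M)%N ->
  \rank A = N ->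
  (forall x, Fstar <= Fls A bv x) ->
  (exists x, Fls A bv x = Fstar) ->
  0 < sigma ->
  eigenvalue (A^T *m A) (sigma ^+ 2) ->
  0 < a -> 1 < b ->
  a / b <= (2 * M%:R * Ltil A)^-1 ->
  let t := 2 * a * sigma ^+ 2 in
  (t < 1 -> exists K : R, forall n : nat, (1 <= n)%N ->
     Tn M (Ltil A) Fstar a b sigma n <= K * powR (b + n%:R) (- t)) /\
  (1 < t -> exists K : R, forall n : nat, (1 <= n)%N ->
     Tn M (Ltil A) Fstar a b sigma n <= K * (b + n%:R)^-1).
Proof.
move=> _ _ _ [x0 hx0] hs heig ha hb hab t.
have hsig := @eig_bound R _ _ _ _ heig.
set Lt := Ltil A in hsig hab *.
have hs2 : 0 < sigma ^+ 2 by rewrite exprn_gt0.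
have hF : 0 <= Fstar.
  rewrite -hx0 /Fls /sqnorm; apply: divr_ge0 => //.
  by apply: sumr_ge0 => i _; exact: sqr_ge0.
have hML : 0 < M%:R * Lt by lra.
have hP : 0 < 2 * M%:R * Lt by rewrite -mulrA mulr_gt0.
have hb0 : 0 < b by lra.
have haP : a * (2 * M%:R * Lt) <= b.
  have hv : 0 <= (2 * M%:R * Lt)^-1 - a / b by rewrite subr_ge0.
  have h := mulr_ge0 hv (ltW (mulr_gt0 hb0 hP)).
  have h1 : a * (2 * M%:R * Lt) = a / b * (b * (2 * M%:R * Lt)).
    by rewrite [RHS]mulrA divfK ?gt_eqF.
  have h2 : (2 * M%:R * Lt)^-1 * (b * (2 * M%:R * Lt)) = b.
    by rewrite mulrCA mulVf ?gt_eqF ?mulr1.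
  by rewrite h1 -[X in _ <= X]h2 -subr_ge0 -mulrBl.
have ht0 : 0 < t by rewrite /t mulr_gt0 // mulr_gt0.
have htb : t <= b.
  have : 2 * a * sigma ^+ 2 <= 2 * a * (M%:R * Lt).
    by apply: ler_wpM2l; [lra | exact: hsig].
  rewrite /t; nra.
set D := 2 * a ^+ 2 * M%:R * Lt * Fstar.
have hD : 0 <= D.
  have -> : D = 2 * a ^+ 2 * Fstar * (M%:R * Lt) by rewrite /D; ring.
  apply: mulr_ge0; [apply: mulr_ge0; [apply: mulr_ge0; [lra | exact: sqr_ge0] | exact: hF] | exact: ltW hML].
have hD2 := hD.
set T := Tn M Lt Fstar a b sigma.
have T0 : T 0 = 0 by rewrite /T /Tn big_geq.
have hB n : 1 < b + n%:R by have := ler0n R n; lra.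
have BS n : b + n.+1%:R = b + n%:R + 1 by rewrite -natr1 addrA.
have Trec n : T n.+1 = (1 - t / (b + n%:R + 1)) * (T n + D / (b + n%:R) ^+ 2).
  rewrite /T Tn_rec /alpha /Cst /D /t BS.
  have h1 := hB n.
  congr (_ * (_ + _)); field; rewrite ?gt_eqF //; lra.
have hx n : 0 <= 1 - t / (b + n%:R + 1).
  have h1 := hB n.
  have := ler0n R n; rewrite subr_ge0 ler_pdivrMr; lra.
have Tge n : 0 <= T n.
  elim: n => [|n IH]; first by rewrite T0.
  rewrite Trec; apply: mulr_ge0 => //; apply: addr_ge0 => //.
  by apply: divr_ge0 => //; exact: sqr_ge0.
split=> hlt.
-
  set p := 1 - t.
  have hp : 0 < p by rewrite /p; lra.
  set E := 4 / p * D.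
  have inv n : T n * powR (b + n%:R + 1) t <= E * (powR b (- p) - powR (b + n%:R) (- p)).
    elim: n => [|n IH].
      by rewrite T0 mul0r addr0 subrr mulr0.
    rewrite Trec BS.
    have h1 := hB n.
    set B := b + n%:R in h1 IH *.
    have f := @factor_le R (B + 1) t ltac:(lra) (ltW ht0).
    have nn : 0 <= T n + D / B ^+ 2.
      by apply: addr_ge0 => //; apply: divr_ge0 => //; exact: sqr_ge0.
    have step1 : (1 - t / (B + 1)) * (T n + D / B ^+ 2) * powR (B + 1 + 1) t
        <= powR (B + 1) t * (T n + D / B ^+ 2).
      by rewrite mulrAC ler_wpM2r.
    have inc := @incr_le R (B + 1) p ltac:(lra) hp.
    rewrite (_ : 1 - p = t) in inc; last by rewrite /p; lra.
    rewrite (_ : B + 1 - 1 = B) in inc; last by lra.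
    have step2 : powR (B + 1) t * (D / B ^+ 2) <= E * (powR B (- p) - powR (B + 1) (- p)).
      have -> : powR (B + 1) t * (D / B ^+ 2) = D * (powR (B + 1) t / B ^+ 2) by rewrite mulrCA.
      have -> : E * (powR B (- p) - powR (B + 1) (- p)) = D * (4 / p * (powR B (- p) - powR (B + 1) (- p))) by rewrite /E; ring.
      exact: ler_wpM2l.
    apply: (le_trans step1); rewrite mulrDr.
    have := IH; lra.
  exists (E * powR b (- p)) => n _.
  have h1 := hB n.
  have P0 : 0 < powR (b + n%:R) t by apply: powR_gt0; lra.
  have P01 : powR (b + n%:R) t <= powR (b + n%:R + 1) t.
    by apply: ge0_ler_powR; rewrite ?nnegrE ?ltW //; lra.
  have hpB : 0 <= powR (b + n%:R) (- p) by apply: ltW; apply: powR_gt0; lra.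
  have hE : 0 <= E by rewrite /E mulr_ge0 // divr_ge0 // ltW.
  have := inv n.
  have : T n * powR (b + n%:R) t <= T n * powR (b + n%:R + 1) t by rewrite ler_wpM2l.
  move=> ha1 ha2.
  have ha3 : T n * powR (b + n%:R) t <= E * powR b (- p).
    apply: (le_trans ha1); apply: (le_trans ha2).
    by rewrite ler_wpM2l // lerBlDr lerDl.
  by rewrite powRN ler_pdivlMr.
-
  set K := 2 * D / (t - 1).
  have hK : 0 <= K by rewrite /K; apply: divr_ge0; [apply: mulr_ge0 | ]; lra.
  have inv n : T n <= K / (b + n%:R).
    elim: n => [|n IH].
      by rewrite T0; apply: divr_ge0 => //; have := hB 0%N; lra.
    rewrite Trec BS.
    have h1 := hB n.
    set B := b + n%:R in h1 IH *.
    apply: (le_trans (y := (1 - t / (B + 1)) * (K / B + D / B ^+ 2))).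
      by apply: ler_wpM2l; [exact: hx | rewrite lerD2r; exact: IH].
    rewrite -subr_ge0.
    have -> : K / (B + 1) - (1 - t / (B + 1)) * (K / B + D / B ^+ 2)
        = D * (B - 1 + t) / (B ^+ 2 * (B + 1)).
      by rewrite /K; apply: keyT; lra.
    apply: divr_ge0; first by apply: mulr_ge0 => //; lra.
    by apply: mulr_ge0; [exact: sqr_ge0 | lra].
  by exists K => n _; exact: inv.
Qed.
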